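(* Let $E,F$ be vector lattices with $F$ Dedekind complete, and let $S,T\in\mathcal{U}_+(E,F)$ be disjoint elements of the vector lattice $\mathcal{U}(E,F)$, i.e. $S\wedge T=0$. Then for every $x\in E$, every weak order unit $u$ of $F$ and every $\varepsilon>0$ there exist a partition of unity $(\pi_\alpha)_{\alpha\in\Delta}$ in $\mathfrak{P}(F)$ and a family $(x_\alpha)_{\alpha\in\Delta}$ of fragments of $x$ such that \[ \pi_\alpha\big(Tx_\alpha+S(x-x_\alpha)\big)\le\varepsilon u\quad\text{for all }\alpha\in\Delta. \]
   Context: For a vector lattice $E$, an element $z$ is a fragment (component) of $x\in E$ if $|z|\wedge|x-z|=0$; $\mathcal{F}_x$ denotes the set of fragments of $x$. An operator $T\colon E\to F$ between vector lattices is orthogonally additive if $T(x+y)=Tx+Ty$ whenever $|x|\wedge|y|=0$; it is order bounded if it maps order bounded sets to order bounded sets. $\mathcal{U}(E,F)$ (abstract Uryson operators) is the set of orthogonally additive order bounded (in general nonlinear) operators $E\to F$, ordered by $S\le T$ iff $Tx-Sx\ge 0$ for all $x\in E$; $\mathcal{U}_+(E,F)$ is its positive cone. When $F$ is Dedekind complete, $\mathcal{U}(E,F)$ is a Dedekind complete vector lattice. $\mathfrak{P}(F)$ denotes the Boolean algebra of band (order) projections of the Dedekind complete vector lattice $F$, with $\rho'\le\rho''$ iff $\rho'\rho''=\rho'$, $\rho'\wedge\rho''=\rho'\rho''$, and $\rho^\perp=I_F-\rho$. A partition of unity in $\mathfrak{P}(F)$ is a family $(\rho_\xi)$ of band projections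 with $\rho_\xi\wedge\rho_\eta=0$ for $\xi\ne\eta$ and $\sup_\xi\rho_\xi=I_F$. An element $u\in F_+$ is a weak order unit if $\{u\}^{\perp\perp}=F$. *)

(* Defs.v *)
From Stdlib Require Import Reals.
Open Scope R_scope.

Record VectorLattice := {
  vl_car :> Type;
  vadd : vl_car -> vl_car -> vl_car;
  vopp : vl_car -> vl_car;
  vzero : vl_car;
  vscal : R -> vl_car -> vl_car;
  vle : vl_car -> vl_car -> Prop;
  vjoin : vl_car -> vl_car -> vl_car;
  vmeet : vl_car -> vl_car -> vl_car;
  vaddA : forall x y z, vadd x (vadd y z) = vadd (vadd x y) z;
  vaddC : forall x y, vadd x y = vadd y x;
  vadd0 : forall x, vadd x vzero = x;
  vaddN : forall x, vadd x (vopp x) = vzero;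
  vscalA : forall a b x, vscal a (vscal b x) = vscal (a * b) x;
  vscal1 : forall x, vscal 1 x = x;
  vscalDr : forall a x y, vscal a (vadd x y) = vadd (vscal a x) (vscal a y);
  vscalDl : forall a b x, vscal (a + b) x = vadd (vscal a x) (vscal b x);
  vle_refl : forall x, vle x x;
  vle_trans : forall x y z, vle x y -> vle y z -> vle x z;
  vle_antisym : forall x y, vle x y -> vle y x -> x = y;
  vjoin_ub1 : forall x y, vle x (vjoin x y);
  vjoin_ub2 : forall x y, vle y (vjoin x y);
  vjoin_lub : forall x y z, vle x z -> vle y z -> vle (vjoin x y) z;
  vmeet_lb1 : forall x y, vle (vmeet x y) x;
  vmeet_lb2 : forall x y, vle (vmeet x y) y;
  vmeet_glb : forall x y z, vle z x -> vle z y -> vle z (vmeet x y);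
  vle_add : forall x y z, vle x y -> vle (vadd x z) (vadd y z);
  vle_scal : forall a x y, 0 <= a -> vle x y -> vle (vscal a x) (vscal a y)
}.

Arguments vadd {v}. Arguments vopp {v}. Arguments vzero {v}.
Arguments vscal {v}. Arguments vle {v}. Arguments vjoin {v}. Arguments vmeet {v}.

Definition vsub {E : VectorLattice} (x y : E) : E := vadd x (vopp y).

Definition vabs {E : VectorLattice} (x : E) : E := vjoin x (vopp x).

Definition disjoint {E : VectorLattice} (x y : E) : Prop :=
  vmeet (vabs x) (vabs y) = vzero.

Definition fragment {E : VectorLattice} (x z : E) : Prop :=
  vmeet (vabs z) (vabs (vsub x z)) = vzero.

Definition is_sup {E : VectorLattice} (A : E -> Prop) (s : E) : Prop :=
  (forall y, A y -> vle y s) /\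
  (forall b, (forall y, A y -> vle y b) -> vle s b).

Definition dedekind_complete (F : VectorLattice) : Prop :=
  forall A : F -> Prop, (exists y, A y) -> (exists b, forall y, A y -> vle y b) ->
  exists s, is_sup A s.

(** weak order unit: u >= 0 and {u}^{perp perp} = F *)
Definition weak_order_unit {F : VectorLattice} (u : F) : Prop :=
  vle vzero u /\
  (forall y z : F, disjoint z u -> disjoint y z).

Definition order_bounded_set {E : VectorLattice} (A : E -> Prop) : Prop :=
  exists a b : E, forall x, A x -> vle a x /\ vle x b.

Definition order_bounded {E F : VectorLattice} (T : E -> F) : Prop :=
  forall A : E -> Prop, order_bounded_set A ->
    order_bounded_set (fun y : F => exists x, A x /\ y = T x).

Definition orthogonally_additive {E F : VectorLattice} (T : E -> F) : Prop :=
  forall x y : E, disjoint x y -> T (vadd x y) = vadd (T x) (T y).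

Definition uryson {E F : VectorLattice} (T : E -> F) : Prop :=
  orthogonally_additive T /\ order_bounded T.

Definition op_le {E F : VectorLattice} (S T : E -> F) : Prop :=
  forall x, vle (S x) (T x).

Definition uryson_inf {E F : VectorLattice} (S T W : E -> F) : Prop :=
  uryson W /\ op_le W S /\ op_le W T /\
  (forall R : E -> F, uryson R -> op_le R S -> op_le R T -> op_le R W).

Definition is_band {F : VectorLattice} (B : F -> Prop) : Prop :=
  B vzero /\
  (forall x y, B x -> B y -> B (vadd x y)) /\
  (forall a x, B x -> B (vscal a x)) /\
  (forall x y, B x -> vle (vabs y) (vabs x) -> B y) /\
  (forall A : F -> Prop, (forall y, A y -> B y) -> forall s, is_sup A s -> B s).

Definition disj_compl {F : VectorLattice} (B : F -> Prop) : F -> Prop :=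
  fun y => forall x, B x -> disjoint x y.

Definition band_projection {F : VectorLattice} (rho : F -> F) : Prop :=
  exists B : F -> Prop, is_band B /\
    forall x, B (rho x) /\ disj_compl B (vsub x (rho x)).

Definition proj_le {F : VectorLattice} (r1 r2 : F -> F) : Prop :=
  forall x, r1 (r2 x) = r1 x.

Definition partition_of_unity {F : VectorLattice} {D : Type} (pi : D -> F -> F) : Prop :=
  (forall a, band_projection (pi a)) /\
  (* pi_a /\ pi_b = pi_a pi_b = 0 for a <> b *)
  (forall a b, a <> b -> forall x, pi a (pi b x) = vzero) /\
  (* sup_a pi_a = I_F in P(F) *)
  (forall a, proj_le (pi a) (fun x => x)) /\
  (forall rho, band_projection rho -> (forall a, proj_le (pi a) rho) ->
     forall x, rho x = x).

(* Main.v *)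
Require Import Defs.
From Stdlib Require Import Reals Lra ClassicalEpsilon FunctionalExtensionality PropExtensionality Classical ProofIrrelevance.
From mathcomp Require classical_sets.
Open Scope R_scope.

Infix "+v" := vadd (at level 50, left associativity).
Infix "-v" := vsub (at level 50, left associativity).
Infix "<=v" := vle (at level 70, no associativity).

Arguments vaddA {v}. Arguments vaddC {v}. Arguments vadd0 {v}. Arguments vaddN {v}. Arguments vscalA {v}. Arguments vscal1 {v}. Arguments vscalDr {v}. Arguments vscalDl {v}. Arguments vle_refl {v}. Arguments vle_trans {v}. Arguments vle_antisym {v}. Arguments vjoin_ub1 {v}. Arguments vjoin_ub2 {v}. Arguments vjoin_lub {v}. Arguments vmeet_lb1 {v}. Arguments vmeet_lb2 {v}. Arguments vmeet_glb {v}. Arguments vle_add {v}. Arguments vle_scal {v}.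

Lemma add0l {V : VectorLattice} (x : V) : vzero +v x = x.
Proof. rewrite vaddC; apply vadd0. Qed.
Lemma addNl {V : VectorLattice} (x : V) : vopp x +v x = vzero.
Proof. rewrite vaddC; apply vaddN. Qed.
Lemma subv {V : VectorLattice} (x : V) : x -v x = vzero.
Proof. apply vaddN. Qed.
Lemma addCA {V : VectorLattice} (a b c : V) : a +v (b +v c) = b +v (a +v c).
Proof. rewrite !vaddA, (vaddC a b); reflexivity. Qed.
Lemma addAC {V : VectorLattice} (a b c : V) : a +v b +v c = a +v c +v b.
Proof. rewrite <- !vaddA, (vaddC b c); reflexivity. Qed.
Lemma addACA {V : VectorLattice} (a b c d : V) : (a +v b) +v (c +v d) = (a +v c) +v (b +v d).
Proof. rewrite !vaddA, (addAC a b c); reflexivity. Qed.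
Lemma add_cancel_r {V : VectorLattice} (x y z : V) : x +v z = y +v z -> x = y.
Proof. intro H. rewrite <- (vadd0 x), <- (vadd0 y), <- (vaddN z), !vaddA, H; reflexivity. Qed.
Lemma add_cancel_l {V : VectorLattice} (x y z : V) : z +v x = z +v y -> x = y.
Proof. rewrite (vaddC z x), (vaddC z y); apply add_cancel_r. Qed.
Lemma opp_unique {V : VectorLattice} (x y : V) : x +v y = vzero -> y = vopp x.
Proof. intro H; apply (add_cancel_l _ _ x); rewrite H, vaddN; reflexivity. Qed.
Lemma oppK {V : VectorLattice} (x : V) : vopp (vopp x) = x.
Proof. symmetry; apply opp_unique, addNl. Qed.
Lemma opp0 {V : VectorLattice} : vopp (@vzero V) = vzero.
Proof. symmetry; apply opp_unique, vadd0. Qed.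
Lemma oppD {V : VectorLattice} (x y : V) : vopp (x +v y) = vopp x +v vopp y.
Proof. symmetry; apply opp_unique. rewrite addACA, !vaddN, vadd0; reflexivity. Qed.
Lemma sub0 {V : VectorLattice} (x : V) : x -v vzero = x.
Proof. unfold vsub; rewrite opp0; apply vadd0. Qed.
Lemma subK {V : VectorLattice} (x y : V) : x -v y +v y = x.
Proof. unfold vsub; rewrite <- vaddA, addNl, vadd0; reflexivity. Qed.
Lemma addK {V : VectorLattice} (x y : V) : x +v y -v y = x.
Proof. unfold vsub; rewrite <- vaddA, vaddN, vadd0; reflexivity. Qed.
Lemma addKl {V : VectorLattice} (x y : V) : x +v (y -v x) = y.
Proof. rewrite vaddC; apply subK. Qed.
Lemma sub_eq0 {V : VectorLattice} (x y : V) : x -v y = vzero -> x = y.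
Proof. intro H; rewrite <- (subK x y), H; apply add0l. Qed.
Lemma oppB {V : VectorLattice} (x y : V) : vopp (x -v y) = y -v x.
Proof. unfold vsub; rewrite oppD, oppK, vaddC; reflexivity. Qed.
Lemma subDD {V : VectorLattice} (a b c d : V) : (a +v b) -v (c +v d) = (a -v c) +v (b -v d).
Proof. unfold vsub; rewrite oppD, addACA; reflexivity. Qed.
Lemma sub0l {V : VectorLattice} (x : V) : vzero -v x = vopp x.
Proof. apply add0l. Qed.

Lemma scal0r {V : VectorLattice} (a : R) : vscal a (@vzero V) = vzero.
Proof. apply (add_cancel_r _ _ (vscal a vzero)). rewrite <- vscalDr, !vadd0, add0l; reflexivity. Qed.
Lemma scal0l {V : VectorLattice} (x : V) : vscal 0 x = vzero.
Proof. apply (add_cancel_r _ _ (vscal 0 x)). rewrite <- vscalDl, add0l, Rplus_0_l; reflexivity. Qed.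
Lemma scalNr {V : VectorLattice} (a : R) (x : V) : vscal a (vopp x) = vopp (vscal a x).
Proof. apply opp_unique. rewrite <- vscalDr, vaddN; apply scal0r. Qed.
Lemma scalNl {V : VectorLattice} (a : R) (x : V) : vscal (- a) x = vopp (vscal a x).
Proof. apply opp_unique. rewrite <- vscalDl, Rplus_opp_r; apply scal0l. Qed.

Lemma le_add2 {V : VectorLattice} (a b c d : V) : a <=v b -> c <=v d -> a +v c <=v b +v d.
Proof. intros H1 H2. apply vle_trans with (b +v c). apply vle_add; auto.
 rewrite (vaddC b c), (vaddC b d); apply vle_add; auto. Qed.
Lemma le_addl {V : VectorLattice} (a b c : V) : a <=v b -> c +v a <=v c +v b.
Proof. intros; apply le_add2; auto using vle_refl. Qed.
Lemma le_opp {V : VectorLattice} (a b : V) : a <=v b -> vopp b <=v vopp a.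
Proof. intro H. pose proof (vle_add _ _ (vopp a +v vopp b) H) as H'.
 replace (a +v (vopp a +v vopp b)) with (vopp b) in H' by (rewrite vaddA, vaddN, add0l; reflexivity).
 replace (b +v (vopp a +v vopp b)) with (vopp a) in H' by (rewrite addCA, vaddN, vadd0; reflexivity).
 exact H'. Qed.
Lemma le_sub0 {V : VectorLattice} (a b : V) : a <=v b -> vzero <=v b -v a.
Proof. intro H; rewrite <- (vaddN a); apply vle_add; auto. Qed.
Lemma sub0_le {V : VectorLattice} (a b : V) : vzero <=v b -v a -> a <=v b.
Proof. intro H; rewrite <- (add0l a), <- (subK b a); apply vle_add; auto. Qed.
Lemma le_subl {V : VectorLattice} (a b c : V) : a <=v c +v b -> a -v b <=v c.
Proof. intro H; rewrite <- (addK c b); apply vle_add; auto. Qed.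
Lemma le_subr {V : VectorLattice} (a b c : V) : a -v b <=v c -> a <=v c +v b.
Proof. intro H; rewrite <- (subK a b); apply vle_add; auto. Qed.
Lemma le_addsub {V : VectorLattice} (a b c : V) : a +v b <=v c -> a <=v c -v b.
Proof. intro H; rewrite <- (addK a b); apply vle_add; auto. Qed.
Lemma le_add_sub {V : VectorLattice} (a b c : V) : a <=v c -v b -> a +v b <=v c.
Proof. intro H; rewrite <- (subK c b); apply vle_add; auto. Qed.
Lemma le_addr_ge0 {V : VectorLattice} (a b : V) : vzero <=v b -> a <=v a +v b.
Proof. intro H; rewrite <- (vadd0 a) at 1; apply le_addl; auto. Qed.
Lemma le_sub_ge0 {V : VectorLattice} (a b : V) : vzero <=v b -> a -v b <=v a.
Proof. intro H; apply le_subl, le_addr_ge0; auto. Qed.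
Lemma ge0_opp {V : VectorLattice} (a : V) : vzero <=v a -> vopp a <=v vzero.
Proof. intro H; rewrite <- opp0; apply le_opp; auto. Qed.
Lemma le0_opp {V : VectorLattice} (a : V) : a <=v vzero -> vzero <=v vopp a.
Proof. intro H; rewrite <- opp0; apply le_opp; auto. Qed.
Lemma add_ge0 {V : VectorLattice} (a b : V) : vzero <=v a -> vzero <=v b -> vzero <=v a +v b.
Proof. intros; rewrite <- (vadd0 vzero); apply le_add2; auto. Qed.
Lemma scal_ge0 {V : VectorLattice} (r : R) (a : V) : 0 <= r -> vzero <=v a -> vzero <=v vscal r a.
Proof. intros; rewrite <- (scal0r r); apply vle_scal; auto. Qed.
Lemma twice_ge0 {V : VectorLattice} (a : V) : vzero <=v a +v a -> vzero <=v a.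
Proof. intro H. apply (vle_scal (/2)) in H; [|lra].
 rewrite scal0r, <- (vscal1 a), <- vscalDl, vscalA in H.
 replace (/2 * (1+1)) with 1 in H by field. rewrite vscal1 in H; exact H. Qed.

Lemma join_le {V : VectorLattice} (x y z : V) : x <=v z -> y <=v z -> vjoin x y <=v z.
Proof. apply vjoin_lub. Qed.
Lemma join_comm {V : VectorLattice} (x y : V) : vjoin x y = vjoin y x.
Proof. apply vle_antisym; apply join_le; auto using vjoin_ub1, vjoin_ub2. Qed.
Lemma meet_comm {V : VectorLattice} (x y : V) : vmeet x y = vmeet y x.
Proof. apply vle_antisym; apply vmeet_glb; auto using vmeet_lb1, vmeet_lb2. Qed.
Lemma join_assoc {V : VectorLattice} (x y z : V) : vjoin (vjoin x y) z = vjoin x (vjoin y z).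
Proof. apply vle_antisym; repeat apply join_le;
 eauto using vle_trans, vjoin_ub1, vjoin_ub2. Qed.
Lemma join_l {V : VectorLattice} (x y : V) : y <=v x -> vjoin x y = x.
Proof. intro; apply vle_antisym; [apply join_le; auto using vle_refl | apply vjoin_ub1]. Qed.
Lemma meet_l {V : VectorLattice} (x y : V) : x <=v y -> vmeet x y = x.
Proof. intro; apply vle_antisym; [apply vmeet_lb1 | apply vmeet_glb; auto using vle_refl]. Qed.
Lemma join_mono {V : VectorLattice} (a b c d : V) : a <=v b -> c <=v d -> vjoin a c <=v vjoin b d.
Proof. intros; apply join_le; eauto using vle_trans, vjoin_ub1, vjoin_ub2. Qed.
Lemma meet_mono {V : VectorLattice} (a b c d : V) : a <=v b -> c <=v d -> vmeet a c <=v vmeet b d.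
Proof. intros; apply vmeet_glb; eauto using vle_trans, vmeet_lb1, vmeet_lb2. Qed.
Lemma join_add {V : VectorLattice} (x y z : V) : vjoin x y +v z = vjoin (x +v z) (y +v z).
Proof. apply vle_antisym.
 - rewrite <- (subK (vjoin (x +v z) (y +v z)) z). apply vle_add.
   apply join_le; apply le_addsub; auto using vjoin_ub1, vjoin_ub2.
 - apply join_le; apply vle_add; auto using vjoin_ub1, vjoin_ub2. Qed.
Lemma meet_add {V : VectorLattice} (x y z : V) : vmeet x y +v z = vmeet (x +v z) (y +v z).
Proof. apply vle_antisym.
 - apply vmeet_glb; apply vle_add; auto using vmeet_lb1, vmeet_lb2.
 - rewrite <- (subK (vmeet (x +v z) (y +v z)) z). apply vle_add.
   apply vmeet_glb; apply le_subl; auto using vmeet_lb1, vmeet_lb2. Qed.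
Lemma opp_join {V : VectorLattice} (x y : V) : vopp (vjoin x y) = vmeet (vopp x) (vopp y).
Proof. apply vle_antisym.
 - apply vmeet_glb; apply le_opp; auto using vjoin_ub1, vjoin_ub2.
 - rewrite <- (oppK (vmeet (vopp x) (vopp y))). apply le_opp.
   apply join_le; rewrite <- (oppK x) at 1; rewrite <- (oppK y) at 1; apply le_opp;
   auto using vmeet_lb1, vmeet_lb2. Qed.
Lemma opp_meet {V : VectorLattice} (x y : V) : vopp (vmeet x y) = vjoin (vopp x) (vopp y).
Proof. rewrite <- (oppK x) at 1; rewrite <- (oppK y) at 1. rewrite <- opp_join, oppK; reflexivity. Qed.
Lemma meet_join_sum {V : VectorLattice} (x y : V) : vmeet x y +v vjoin x y = x +v y.
Proof.
 assert (H : vjoin x y +v (vopp x +v vopp y) = vopp (vmeet x y)).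
 { rewrite join_add, opp_meet, vaddA, vaddN, add0l, addCA, vaddN, vadd0, join_comm; reflexivity. }
 apply (add_cancel_r _ _ (vopp x +v vopp y)).
 rewrite <- vaddA, H, vaddN, addACA, !vaddN, vadd0; reflexivity. Qed.
Lemma sub_meet {V : VectorLattice} (t p r : V) : t -v vmeet p r = vjoin (t -v p) (t -v r).
Proof. unfold vsub. rewrite opp_meet, vaddC, join_add, !(vaddC t); reflexivity. Qed.

Definition vpos {V : VectorLattice} (x : V) : V := vjoin x vzero.
Definition vneg {V : VectorLattice} (x : V) : V := vjoin (vopp x) vzero.

Lemma le_abs {V : VectorLattice} (x : V) : x <=v vabs x.
Proof. apply vjoin_ub1. Qed.
Lemma le_abs_opp {V : VectorLattice} (x : V) : vopp x <=v vabs x.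
Proof. apply vjoin_ub2. Qed.
Lemma abs_ge0 {V : VectorLattice} (x : V) : vzero <=v vabs x.
Proof. apply twice_ge0. rewrite <- (vaddN x). apply le_add2; auto using le_abs, le_abs_opp. Qed.
Lemma abs_opp {V : VectorLattice} (x : V) : vabs (vopp x) = vabs x.
Proof. unfold vabs; rewrite oppK, join_comm; reflexivity. Qed.
Lemma abs_pos {V : VectorLattice} (x : V) : vzero <=v x -> vabs x = x.
Proof. intro H; apply join_l. apply vle_trans with vzero; auto using ge0_opp. Qed.
Lemma abs0 {V : VectorLattice} : vabs (@vzero V) = vzero.
Proof. apply abs_pos, vle_refl. Qed.
Lemma abs_tri {V : VectorLattice} (x y : V) : vabs (x +v y) <=v vabs x +v vabs y.
Proof. apply join_le. apply le_add2; apply le_abs.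
 rewrite oppD; apply le_add2; apply le_abs_opp. Qed.
Lemma abs_sub_le {V : VectorLattice} (x y : V) : vabs (x -v y) <=v vabs x +v vabs y.
Proof. unfold vsub. rewrite <- (abs_opp y). apply abs_tri. Qed.
Lemma abs_eq0 {V : VectorLattice} (x : V) : vabs x = vzero -> x = vzero.
Proof. intro H. apply vle_antisym. rewrite <- H; apply le_abs.
 rewrite <- (oppK x). apply le0_opp. rewrite <- H; apply le_abs_opp. Qed.
Lemma abs_le {V : VectorLattice} (x y : V) : x <=v y -> vopp x <=v y -> vabs x <=v y.
Proof. apply join_le. Qed.

Lemma pos_ge0 {V : VectorLattice} (x : V) : vzero <=v vpos x.
Proof. apply vjoin_ub2. Qed.
Lemma neg_ge0 {V : VectorLattice} (x : V) : vzero <=v vneg x.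
Proof. apply vjoin_ub2. Qed.
Lemma le_pos {V : VectorLattice} (x : V) : x <=v vpos x.
Proof. apply vjoin_ub1. Qed.
Lemma pos_le_abs {V : VectorLattice} (x : V) : vpos x <=v vabs x.
Proof. apply join_le; auto using le_abs, abs_ge0. Qed.
Lemma neg_le_abs {V : VectorLattice} (x : V) : vneg x <=v vabs x.
Proof. apply join_le; auto using le_abs_opp, abs_ge0. Qed.
Lemma neg_eq {V : VectorLattice} (x : V) : vneg x = vopp (vmeet x vzero).
Proof. unfold vneg; rewrite opp_meet, opp0; reflexivity. Qed.
Lemma pos_neg {V : VectorLattice} (x : V) : vpos x -v vneg x = x.
Proof. unfold vsub; rewrite neg_eq, oppK, vaddC. unfold vpos.
 rewrite meet_join_sum, vadd0; reflexivity. Qed.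
Lemma pos_opp {V : VectorLattice} (x : V) : vpos (vopp x) = vneg x.
Proof. reflexivity. Qed.
Lemma neg_opp {V : VectorLattice} (x : V) : vneg (vopp x) = vpos x.
Proof. unfold vneg, vpos; rewrite oppK; reflexivity. Qed.
Lemma sub_sub {V : VectorLattice} (a b : V) : a -v (a -v b) = b.
Proof. unfold vsub at 1. rewrite oppB. apply addKl. Qed.
Lemma neg_eq2 {V : VectorLattice} (x : V) : vneg x = vpos x -v x.
Proof. rewrite <- (pos_neg x) at 3. rewrite sub_sub; reflexivity. Qed.
Lemma pos_neg_disj {V : VectorLattice} (x : V) : vmeet (vpos x) (vneg x) = vzero.
Proof. rewrite neg_eq2. unfold vsub. rewrite <- (add0l (vpos x)) at 1.
 rewrite (vaddC (vpos x) (vopp x)), <- meet_add.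
 rewrite <- (oppK (vmeet vzero (vopp x))), opp_meet, opp0, oppK, join_comm.
 fold (vpos x). apply addNl. Qed.
Lemma le0_opp_sub {V : VectorLattice} (a b : V) : a -v b <=v vzero -> vzero <=v b -v a.
Proof. intro H; rewrite <- oppB; apply le0_opp; auto. Qed.
Lemma meet_ge0 {V : VectorLattice} (a b : V) : vzero <=v a -> vzero <=v b -> vzero <=v vmeet a b.
Proof. apply vmeet_glb. Qed.
Lemma disj_pos_sum {V : VectorLattice} (p q : V) : vmeet p q = vzero -> p +v q = vjoin p q.
Proof. intro H; rewrite <- meet_join_sum, H, add0l; reflexivity. Qed.
Lemma abs_pos_neg {V : VectorLattice} (x : V) : vabs x = vpos x +v vneg x.
Proof. rewrite disj_pos_sum by apply pos_neg_disj. apply vle_antisym.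
 - apply join_le. apply vle_trans with (vpos x); [apply le_pos|apply vjoin_ub1].
   apply vle_trans with (vneg x); [apply vjoin_ub1|apply vjoin_ub2].
 - apply join_le; auto using pos_le_abs, neg_le_abs. Qed.

Lemma meet0_mono {V : VectorLattice} (p q p' q' : V) :
  vzero <=v p' -> p' <=v p -> vzero <=v q' -> q' <=v q -> vmeet p q = vzero -> vmeet p' q' = vzero.
Proof. intros; apply vle_antisym. rewrite <- H3; apply meet_mono; auto. apply meet_ge0; auto. Qed.
Lemma sum_meet {V : VectorLattice} (p q r : V) : vzero <=v p -> vzero <=v q -> vzero <=v r ->
  vmeet (p +v q) r <=v vmeet p r +v vmeet q r.
Proof. intros Hp Hq Hr. set (t := vmeet (p +v q) r).
 rewrite vaddC. apply le_subr. apply vmeet_glb.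
 - rewrite sub_meet. rewrite <- (join_l q vzero) by auto. apply join_mono.
   apply le_subl; rewrite vaddC; apply vmeet_lb1.
   apply le_subl; rewrite add0l; apply vmeet_lb2.
 - apply vle_trans with t. apply le_sub_ge0, meet_ge0; auto. apply vmeet_lb2. Qed.
Lemma sum_meet0 {V : VectorLattice} (p q r : V) : vzero <=v p -> vzero <=v q -> vzero <=v r ->
  vmeet p r = vzero -> vmeet q r = vzero -> vmeet (p +v q) r = vzero.
Proof. intros. apply vle_antisym. rewrite <- (vadd0 vzero), <- H2 at 1. rewrite <- H3. apply sum_meet; auto.
 apply meet_ge0; auto; apply add_ge0; auto. Qed.

Lemma disj_sym {V : VectorLattice} (a b : V) : disjoint a b -> disjoint b a.
Proof. unfold disjoint; rewrite meet_comm; auto. Qed.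
Lemma disj_solid {V : VectorLattice} (a a' b : V) : vabs a' <=v vabs a -> disjoint a b -> disjoint a' b.
Proof. unfold disjoint; intros; eapply meet0_mono; eauto using abs_ge0, vle_refl. Qed.
Lemma disj_add {V : VectorLattice} (a b c : V) : disjoint a c -> disjoint b c -> disjoint (a +v b) c.
Proof. unfold disjoint; intros. eapply meet0_mono with (p := vabs a +v vabs b); auto using abs_ge0, vle_refl, abs_tri.
 apply sum_meet0; auto using abs_ge0. Qed.
Lemma disj_opp {V : VectorLattice} (a b : V) : disjoint a b -> disjoint (vopp a) b.
Proof. unfold disjoint; rewrite abs_opp; auto. Qed.
Lemma disj_sub {V : VectorLattice} (a b c : V) : disjoint a c -> disjoint b c -> disjoint (a -v b) c.
Proof. intros; apply disj_add; auto using disj_opp. Qed.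
Lemma disj0 {V : VectorLattice} (b : V) : disjoint vzero b.
Proof. unfold disjoint; rewrite abs0. apply meet_l, abs_ge0. Qed.
Lemma disj_self {V : VectorLattice} (a : V) : disjoint a a -> a = vzero.
Proof. unfold disjoint; intro H; rewrite meet_l in H by apply vle_refl; apply abs_eq0; auto. Qed.
Lemma abs_disj_le {V : VectorLattice} (a b : V) : disjoint a b -> vabs a <=v vabs (a +v b).
Proof. intro H. apply sub0_le. apply le0_opp_sub.
 unfold disjoint in H. rewrite <- H. apply vmeet_glb.
 - apply le_sub_ge0, abs_ge0.
 - apply le_subl. rewrite vaddC. replace a with ((a +v b) -v b) at 1 by apply addK.
   apply abs_sub_le. Qed.
Lemma abs_disj_sum {V : VectorLattice} (a b : V) : disjoint a b -> vabs (a +v b) = vabs a +v vabs b.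
Proof. intro H. apply vle_antisym. apply abs_tri.
 rewrite disj_pos_sum by exact H. apply join_le. apply abs_disj_le; auto.
 rewrite vaddC. apply abs_disj_le, disj_sym; auto. Qed.

Lemma natmul_disj {V : VectorLattice} (p q : V) (n : nat) : vzero <=v p -> vzero <=v q ->
  vmeet p q = vzero -> vmeet (vscal (INR n) p) q = vzero.
Proof. intros Hp Hq H. induction n.
 - simpl. rewrite scal0l. apply meet_l; auto.
 - rewrite S_INR, vscalDl, vscal1. apply sum_meet0; auto. apply scal_ge0; auto using pos_INR. Qed.
Lemma scal_disj_pos {V : VectorLattice} (k : R) (p q : V) : 0 <= k -> vzero <=v p -> vzero <=v q ->
  vmeet p q = vzero -> vmeet (vscal k p) q = vzero.
Proof. intros Hk Hp Hq H. destruct (INR_unbounded k) as [n Hn].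
 apply meet0_mono with (p := vscal (INR n) p) (q := q); auto using vle_refl, scal_ge0, natmul_disj.
 apply sub0_le. replace (vscal (INR n) p -v vscal k p) with (vscal (INR n - k) p).
 apply scal_ge0; auto; lra.
 unfold Rminus, vsub. rewrite vscalDl, scalNl; reflexivity. Qed.
Lemma abs_scal_le {V : VectorLattice} (r : R) (a : V) : vabs (vscal r a) <=v vscal (Rabs r) (vabs a).
Proof. destruct (Rle_or_lt 0 r) as [H|H].
 - rewrite Rabs_pos_eq by auto. apply abs_le. apply vle_scal; auto using le_abs.
   rewrite <- scalNr. apply vle_scal; auto using le_abs_opp.
 - rewrite Rabs_left by auto. apply abs_le.
   replace (vscal r a) with (vscal (- r) (vopp a)). apply vle_scal; [lra| apply le_abs_opp].
   rewrite scalNl, scalNr, oppK; reflexivity.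
   rewrite <- scalNl. apply vle_scal; [lra| apply le_abs]. Qed.
Lemma disj_scal {V : VectorLattice} (r : R) (a b : V) : disjoint a b -> disjoint (vscal r a) b.
Proof. unfold disjoint; intro H.
 apply meet0_mono with (p := vscal (Rabs r) (vabs a)) (q := vabs b); auto using abs_ge0, vle_refl, abs_scal_le.
 apply scal_disj_pos; auto using abs_ge0, Rabs_pos. Qed.

Lemma sup_disj {V : VectorLattice} (A : V -> Prop) (s v : V) :
  (forall a, A a -> disjoint a v) -> is_sup A s -> disjoint s v.
Proof. intros HA [Hub Hl].
 destruct (classic (exists a0, A a0)) as [[a0 Ha0]|Hne].
 - unfold disjoint. rewrite abs_pos_neg. apply sum_meet0; auto using pos_ge0, neg_ge0, abs_ge0.
   + set (g := vjoin (vpos s) (vabs v)).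
     assert (Hs : s <=v g -v (vabs v)).
     { apply Hl. intros a Ha. apply vle_trans with (vpos a). apply le_pos.
       apply le_addsub. rewrite disj_pos_sum.
       - apply join_mono; [|apply vle_refl]. apply join_mono; [apply Hub; auto| apply vle_refl].
       - apply meet0_mono with (p := vabs a) (q := (vabs v)); auto using pos_ge0, abs_ge0, pos_le_abs, vle_refl.
          apply HA; auto. }
     assert (Hp : vpos s <=v g -v (vabs v)).
     { apply join_le; auto. apply le_sub0, vjoin_ub2. }
     apply vle_antisym.
     * assert (E : vmeet (vpos s) (vabs v) = vpos s +v (vabs v) -v g).
       { rewrite <- (meet_join_sum (vpos s) (vabs v)). rewrite addK. reflexivity. }
       rewrite E. apply le_subl. rewrite add0l. apply le_add_sub. exact Hp.
     * apply meet_ge0; auto using pos_ge0, abs_ge0.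
   + apply meet0_mono with (p := vabs a0) (q := (vabs v)); auto using neg_ge0, abs_ge0, vle_refl.
     apply vle_trans with (vneg a0); auto using neg_le_abs. apply join_mono; auto using vle_refl.
     apply le_opp; auto. apply HA; auto.
 - assert (H : s <=v s -v vabs s). { apply Hl. intros a Ha. exfalso; eauto. }
   assert (Hz : s = vzero).
   { apply abs_eq0. apply vle_antisym; auto using abs_ge0.
     apply le_add_sub in H. apply (vle_add _ _ (vopp s)) in H. rewrite vaddC, vaddA, addNl, add0l, vaddN in H. exact H. }
   rewrite Hz. apply disj0. Qed.

Lemma dc_band {V : VectorLattice} (A : V -> Prop) : is_band (disj_compl A).
Proof. unfold disj_compl. repeat split.
 - intros; apply disj_sym, disj0.
 - intros x y Hx Hy z Hz. apply disj_sym, disj_add; apply disj_sym; auto.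
 - intros a x Hx z Hz. apply disj_sym, disj_scal, disj_sym; auto.
 - intros x y Hx Hxy z Hz. apply disj_sym. apply disj_solid with x; auto. apply disj_sym; auto.
 - intros A' HA' s Hs z Hz. apply disj_sym. apply sup_disj with A'; auto.
   intros a Ha. apply disj_sym; auto. Qed.

Lemma sub_le0 {V : VectorLattice} (a b : V) : a -v b <=v vzero -> a <=v b.
Proof. intro H; apply le_subr in H; rewrite add0l in H; exact H. Qed.
Lemma pos_disj_le {V : VectorLattice} (a b : V) : disjoint a b -> vpos a <=v vpos (a +v b).
Proof. intro H. apply sub_le0. unfold disjoint in H. rewrite <- H. apply vmeet_glb.
 - apply vle_trans with (vpos a). apply le_sub_ge0, pos_ge0. apply pos_le_abs.
 - apply vle_trans with (vneg b); [|apply neg_le_abs]. apply le_subl. rewrite vaddC. apply join_le.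
   + replace a with ((a +v b) +v vopp b) at 1 by (rewrite <- vaddA, vaddN, vadd0; reflexivity).
     apply le_add2. apply le_pos. apply vjoin_ub1.
   + apply add_ge0; auto using pos_ge0, neg_ge0. Qed.
Lemma pos_disj_add {V : VectorLattice} (a b : V) : disjoint a b -> vpos (a +v b) = vpos a +v vpos b.
Proof. intro H. apply vle_antisym.
 - apply join_le. apply le_add2; apply le_pos. apply add_ge0; apply pos_ge0.
 - rewrite disj_pos_sum. apply join_le. apply pos_disj_le; auto.
   rewrite vaddC; apply pos_disj_le, disj_sym; auto.
   apply meet0_mono with (p := vabs a) (q := vabs b); auto using pos_ge0, pos_le_abs. Qed.
Lemma neg_disj_add {V : VectorLattice} (a b : V) : disjoint a b -> vneg (a +v b) = vneg a +v vneg b.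
Proof. intro H. change (vpos (vopp (a +v b)) = vpos (vopp a) +v vpos (vopp b)). rewrite oppD. apply pos_disj_add.
 apply disj_opp, disj_sym, disj_opp, disj_sym; auto. Qed.

Lemma pos_decomp {V : VectorLattice} (p r s : V) : vzero <=v p -> vzero <=v r -> vzero <=v s ->
  vmeet r s = vzero -> p <=v r +v s -> p = vmeet p r +v vmeet p s.
Proof. intros Hp Hr Hs Hrs H. apply vle_antisym.
 - rewrite vaddC. apply le_subr.
   apply vmeet_glb. apply le_sub_ge0, meet_ge0; auto.
   rewrite sub_meet, subv. apply join_le; auto. apply le_subl. rewrite vaddC; auto.
 - rewrite disj_pos_sum. apply join_le; apply vmeet_lb1.
   apply meet0_mono with (p := r) (q := s); auto using meet_ge0, vmeet_lb2. Qed.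

Definition comp {V : VectorLattice} (y z : V) : V :=
  vmeet (vpos y) (vpos z) -v vmeet (vneg y) (vneg z).

Lemma comp_abs {V : VectorLattice} (y z : V) : vabs (comp y z) <=v vabs y.
Proof. unfold comp. eapply vle_trans. apply abs_sub_le.
 rewrite !abs_pos by (apply meet_ge0; auto using pos_ge0, neg_ge0).
 rewrite abs_pos_neg. apply le_add2; apply vmeet_lb1. Qed.

Lemma decomp_one {V : VectorLattice} (y w z1 z2 : V) : disjoint y w -> disjoint z1 z2 ->
  y +v w = z1 +v z2 ->
  fragment z1 (comp y z1) /\ y = comp y z1 +v comp y z2.
Proof. intros Hyw Hz Heq.
 assert (Pe : vpos y +v vpos w = vpos z1 +v vpos z2).
 { rewrite <- !pos_disj_add, Heq; auto. }
 assert (Ne : vneg y +v vneg w = vneg z1 +v vneg z2).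
 { rewrite <- !neg_disj_add, Heq; auto. }
 assert (Dz : forall f : V -> V, (forall x, vzero <=v f x) -> (forall x, f x <=v vabs x) -> vmeet (f z1) (f z2) = vzero).
 { intros f Hf1 Hf2. apply meet0_mono with (p := vabs z1) (q := vabs z2); auto. }
 assert (Dy : forall f : V -> V, (forall x, vzero <=v f x) -> (forall x, f x <=v vabs x) -> vmeet (f y) (f w) = vzero).
 { intros f Hf1 Hf2. apply meet0_mono with (p := vabs y) (q := vabs w); auto. }
 split.
 - assert (Ez : z1 = comp y z1 +v comp w z1).
   { rewrite <- (pos_neg z1) at 1. unfold comp. rewrite <- subDD.
     rewrite (meet_comm (vpos y)), (meet_comm (vpos w)), (meet_comm (vneg y)), (meet_comm (vneg w)).
     rewrite <- !pos_decomp; auto using pos_ge0, neg_ge0.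
     apply (Dy vneg); auto using neg_ge0, neg_le_abs.
     rewrite Ne. apply le_addr_ge0, neg_ge0.
     apply (Dy vpos); auto using pos_ge0, pos_le_abs.
     rewrite Pe. apply le_addr_ge0, pos_ge0. }
   unfold fragment. replace (z1 -v comp y z1) with (comp w z1).
   apply meet0_mono with (p := vabs y) (q := vabs w); auto using abs_ge0, comp_abs.
   rewrite Ez at 2. unfold vsub. rewrite (vaddC (comp y z1)), <- vaddA, vaddN, vadd0; reflexivity.
 - rewrite <- (pos_neg y) at 1. unfold comp. rewrite <- subDD.
   rewrite <- !pos_decomp; auto using pos_ge0, neg_ge0.
   all: try (apply (Dz vneg); auto using neg_ge0, neg_le_abs).
   all: try (apply (Dz vpos); auto using pos_ge0, pos_le_abs).
   all: try (rewrite <- Ne; apply le_addr_ge0, neg_ge0).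
   all: try (rewrite <- Pe; apply le_addr_ge0, pos_ge0). Qed.

Lemma frag_decomp {V : VectorLattice} (z1 z2 y : V) : disjoint z1 z2 -> fragment (z1 +v z2) y ->
  exists y1 y2, fragment z1 y1 /\ fragment z2 y2 /\ y = y1 +v y2.
Proof. intros Hz Hy. set (w := (z1 +v z2) -v y).
 assert (E : y +v w = z1 +v z2) by (unfold w; apply addKl).
 destruct (decomp_one y w z1 z2 Hy Hz E) as [H1 H2].
 destruct (decomp_one y w z2 z1 Hy (disj_sym _ _ Hz)) as [H3 _].
 rewrite E; apply vaddC.
 exists (comp y z1), (comp y z2); auto. Qed.

Lemma frag_le {V : VectorLattice} (z y : V) : fragment z y -> vabs y <=v vabs z /\ vabs (z -v y) <=v vabs z.
Proof. intro H. assert (E : vabs z = vabs y +v vabs (z -v y)).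
 { rewrite <- abs_disj_sum by exact H. rewrite addKl; reflexivity. }
 rewrite E. split. apply le_addr_ge0, abs_ge0. rewrite vaddC; apply le_addr_ge0, abs_ge0. Qed.
Lemma frag0 {V : VectorLattice} (z : V) : fragment z vzero.
Proof. apply disj0. Qed.
Lemma fragz {V : VectorLattice} (z : V) : fragment z z.
Proof. unfold fragment. rewrite subv. apply disj_sym, disj0. Qed.
Lemma frag_add {V : VectorLattice} (z1 z2 y1 y2 : V) : disjoint z1 z2 -> fragment z1 y1 -> fragment z2 y2 ->
  fragment (z1 +v z2) (y1 +v y2) /\ disjoint y1 y2 /\ disjoint (z1 -v y1) (z2 -v y2) /\
  (z1 +v z2) -v (y1 +v y2) = (z1 -v y1) +v (z2 -v y2).
Proof. intros Hz H1 H2. destruct (frag_le _ _ H1) as [A1 B1]. destruct (frag_le _ _ H2) as [A2 B2].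
 assert (G : forall a b, vabs a <=v vabs z1 -> vabs b <=v vabs z2 -> disjoint a b).
 { intros a b Ha Hb. apply disj_solid with z1; auto. apply disj_sym, disj_solid with z2; auto. apply disj_sym; auto. }
 assert (G' : forall a b, vabs a <=v vabs z2 -> vabs b <=v vabs z1 -> disjoint a b).
 { intros a b Ha Hb. apply disj_sym; auto. }
 repeat split; auto.
 - unfold fragment. fold (disjoint (y1 +v y2) ((z1 +v z2) -v (y1 +v y2))). rewrite subDD.
   apply disj_add; apply disj_sym; apply disj_add; apply disj_sym; auto.
 - apply subDD. Qed.

Lemma inf_exists {F : VectorLattice} (HF : dedekind_complete F) (X : F -> Prop) (l : F) :
  (exists x, X x) -> (forall x, X x -> l <=v x) ->
  exists m, (forall x, X x -> m <=v x) /\ (forall l', (forall x, X x -> l' <=v x) -> l' <=v m).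
Proof. intros [x0 Hx0] Hl.
 destruct (HF (fun y => X (vopp y))) as [s [Hs1 Hs2]].
 - exists (vopp x0); rewrite oppK; auto.
 - exists (vopp l). intros y Hy. rewrite <- (oppK y); apply le_opp; auto.
 - exists (vopp s). split.
   + intros x Hx. rewrite <- (oppK x). apply le_opp, Hs1. rewrite oppK; auto.
   + intros l' Hl'. rewrite <- (oppK l'). apply le_opp, Hs2. intros y Hy.
     rewrite <- (oppK y). apply le_opp; auto. Qed.

Lemma subsub {V : VectorLattice} (a b c d : V) : (a -v b) -v (c -v d) = (a -v c) -v (b -v d).
Proof. unfold vsub. rewrite !oppD, !oppK. rewrite addACA. rewrite (vaddC (vopp b) d). reflexivity. Qed.

Lemma subsub2 {V : VectorLattice} (y p q : V) : (y -v p) -v (y -v q) = q -v p.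
Proof. rewrite subsub, subv, sub0l, oppB; reflexivity. Qed.

Lemma proj_exists_pos {F : VectorLattice} (HF : dedekind_complete F) (A : F -> Prop) (y : F) :
  vzero <=v y -> exists p, disj_compl A p /\ disj_compl (disj_compl A) (y -v p) /\ vzero <=v p /\ p <=v y.
Proof. intro Hy. set (B := disj_compl A).
 destruct (dc_band A) as [B0 [Badd [Bscal [Bsol Bsup]]]]. fold B in B0, Badd, Bscal, Bsol, Bsup.
 set (S := fun b => B b /\ vzero <=v b /\ b <=v y).
 destruct (HF S) as [s Hs].
 - exists vzero; repeat split; auto using vle_refl.
 - exists y; intros b [_ [_ H]]; auto.
 - destruct Hs as [Hs1 Hs2].
   assert (Hs0 : vzero <=v s) by (apply Hs1; repeat split; auto using vle_refl).
   assert (Hsy : s <=v y) by (apply Hs2; intros b [_ [_ H]]; auto).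
   assert (HsB : B s) by (apply (Bsup S); [intros b [H _]; auto| split; auto]).
   exists s; repeat split; auto.
   intros b Hb. unfold disjoint.
   set (c := vmeet (vabs b) (vabs (y -v s))).
   assert (Hc0 : vzero <=v c) by (apply meet_ge0; apply abs_ge0).
   assert (HcB : B c).
   { apply Bsol with b; auto. rewrite (abs_pos c) by auto. apply vmeet_lb1. }
   assert (Hcs : c +v s <=v s).
   { apply Hs1. repeat split.
     - apply Badd; auto.
     - apply add_ge0; auto.
     - apply le_add_sub. apply vle_trans with (vabs (y -v s)). apply vmeet_lb2.
       rewrite abs_pos. apply vle_refl. apply le_sub0; auto. }
   apply vle_antisym; auto.
   apply (vle_add _ _ (vopp s)) in Hcs. rewrite <- vaddA, vaddN, vadd0 in Hcs. exact Hcs. Qed.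

Lemma proj_exists {F : VectorLattice} (HF : dedekind_complete F) (A : F -> Prop) (y : F) :
  exists p, disj_compl A p /\ disj_compl (disj_compl A) (y -v p).
Proof.
 destruct (proj_exists_pos HF A (vpos y) (pos_ge0 y)) as [p1 [H1 [H2 _]]].
 destruct (proj_exists_pos HF A (vneg y) (neg_ge0 y)) as [p2 [H3 [H4 _]]].
 destruct (dc_band A) as [_ [_ [_ [_ _]]]].
 exists (p1 -v p2). split.
 - intros x Hx. apply disj_sym, disj_sub; apply disj_sym; auto.
 - rewrite <- (pos_neg y) at 1. rewrite subsub. intros x Hx. apply disj_sym, disj_sub; apply disj_sym; auto. Qed.

Definition proj {F : VectorLattice} (HF : dedekind_complete F) (A : F -> Prop) (y : F) : F :=
  proj1_sig (constructive_indefinite_description _ (proj_exists HF A y)).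



Lemma proj_spec {F : VectorLattice} (HF : dedekind_complete F) (A : F -> Prop) (y : F) :
  disj_compl A (proj HF A y) /\ disj_compl (disj_compl A) (y -v proj HF A y).
Proof. unfold proj. destruct (constructive_indefinite_description _ _) as [p Hp]; exact Hp. Qed.

Lemma proj_uniq {F : VectorLattice} (HF : dedekind_complete F) (A : F -> Prop) (y p : F) :
  disj_compl A p -> disj_compl (disj_compl A) (y -v p) -> proj HF A y = p.
Proof. intros H1 H2. destruct (proj_spec HF A y) as [H3 H4].
 apply sub_eq0. apply disj_self.
 assert (Hin : disj_compl A (proj HF A y -v p)).
 { intros x Hx. apply disj_sym, disj_sub; apply disj_sym; auto. }
 assert (Hout : disj_compl (disj_compl A) (proj HF A y -v p)).
 { rewrite <- (subsub2 y p (proj HF A y)). intros x Hx. apply disj_sym, disj_sub; apply disj_sym; auto. }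
 apply Hout, Hin. Qed.

Lemma proj_add {F : VectorLattice} (HF : dedekind_complete F) (A : F -> Prop) (y z : F) :
  proj HF A (y +v z) = proj HF A y +v proj HF A z.
Proof. destruct (proj_spec HF A y) as [H1 H2]. destruct (proj_spec HF A z) as [H3 H4].
 apply proj_uniq.
 - intros x Hx. apply disj_sym, disj_add; apply disj_sym; auto.
 - rewrite subDD. intros x Hx. apply disj_sym, disj_add; apply disj_sym; auto. Qed.
Lemma proj_scal {F : VectorLattice} (HF : dedekind_complete F) (A : F -> Prop) (r : R) (y : F) :
  proj HF A (vscal r y) = vscal r (proj HF A y).
Proof. destruct (proj_spec HF A y) as [H1 H2]. apply proj_uniq.
 - intros x Hx. apply disj_sym, disj_scal, disj_sym; auto.
 - unfold vsub. rewrite <- scalNr, <- vscalDr. intros x Hx. apply disj_sym, disj_scal, disj_sym; auto. Qed.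
Lemma proj_opp {F : VectorLattice} (HF : dedekind_complete F) (A : F -> Prop) (y : F) :
  proj HF A (vopp y) = vopp (proj HF A y).
Proof. apply opp_unique. rewrite <- proj_add, vaddN. apply proj_uniq.
 intros x Hx; apply disj_sym, disj0. rewrite subv. intros x Hx; apply disj_sym, disj0. Qed.
Lemma proj_sub {F : VectorLattice} (HF : dedekind_complete F) (A : F -> Prop) (y z : F) :
  proj HF A (y -v z) = proj HF A y -v proj HF A z.
Proof. unfold vsub. rewrite proj_add, proj_opp; reflexivity. Qed.
Lemma proj_pos {F : VectorLattice} (HF : dedekind_complete F) (A : F -> Prop) (y : F) :
  vzero <=v y -> vzero <=v proj HF A y /\ proj HF A y <=v y.
Proof. intro Hy. destruct (proj_exists_pos HF A y Hy) as [p [H1 [H2 H3]]].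
 rewrite (proj_uniq HF A y p); auto. Qed.
Lemma proj_in {F : VectorLattice} (HF : dedekind_complete F) (A : F -> Prop) (y : F) :
  disj_compl A y -> proj HF A y = y.
Proof. intro H. apply proj_uniq; auto. rewrite subv. intros x Hx; apply disj_sym, disj0. Qed.
Lemma proj_out {F : VectorLattice} (HF : dedekind_complete F) (A : F -> Prop) (y : F) :
  disj_compl (disj_compl A) y -> proj HF A y = vzero.
Proof. intro H. apply proj_uniq. intros x Hx; apply disj_sym, disj0. rewrite sub0; auto. Qed.
Lemma proj_bp {F : VectorLattice} (HF : dedekind_complete F) (A : F -> Prop) :
  band_projection (proj HF A).
Proof. exists (disj_compl A). split. apply dc_band. intro x. apply proj_spec. Qed.

Lemma oa_zero {E F : VectorLattice} (T : E -> F) : orthogonally_additive T -> T vzero = vzero.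
Proof. intro H. pose proof (H vzero vzero (disj0 vzero)) as K. rewrite vadd0 in K.
 symmetry. apply (add_cancel_l _ _ (T vzero)). rewrite vadd0. exact K. Qed.

Definition aval {E F : VectorLattice} (S T : E -> F) (z y : E) : F := T y +v S (z -v y).

Lemma Rop_ex {E F : VectorLattice} (HF : dedekind_complete F) (S T : E -> F)
  (HSpos : forall x, vzero <=v S x) (HTpos : forall x, vzero <=v T x) (z : E) :
  exists m, (forall y, fragment z y -> m <=v aval S T z y) /\
     (forall l, (forall y, fragment z y -> l <=v aval S T z y) -> l <=v m).
Proof. destruct (inf_exists HF (fun v => exists y, fragment z y /\ v = aval S T z y) vzero) as [m [H1 H2]].
 - exists (aval S T z vzero). exists vzero; split; auto using frag0.
 - intros v [y [_ ->]]. apply add_ge0; auto.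
 - exists m; split.
   + intros y Hy; apply H1; eauto.
   + intros l Hl; apply H2. intros v [y [Hy ->]]; auto. Qed.

Definition Rop {E F : VectorLattice} (HF : dedekind_complete F) (S T : E -> F)
  (HSpos : forall x, vzero <=v S x) (HTpos : forall x, vzero <=v T x) (z : E) : F :=
  proj1_sig (constructive_indefinite_description _ (Rop_ex HF S T HSpos HTpos z)).

Lemma Rop_spec {E F : VectorLattice} (HF : dedekind_complete F) (S T : E -> F)
  (HSpos : forall x, vzero <=v S x) (HTpos : forall x, vzero <=v T x) (z : E) :
  (forall y, fragment z y -> Rop HF S T HSpos HTpos z <=v aval S T z y) /\
     (forall l, (forall y, fragment z y -> l <=v aval S T z y) -> l <=v Rop HF S T HSpos HTpos z).
Proof. unfold Rop. destruct (constructive_indefinite_description _ _) as [m Hm]; exact Hm. Qed.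

Lemma aval_add {E F : VectorLattice} (S T : E -> F) (HS : orthogonally_additive S) (HT : orthogonally_additive T)
  (z1 z2 y1 y2 : E) : disjoint z1 z2 -> fragment z1 y1 -> fragment z2 y2 ->
  fragment (z1 +v z2) (y1 +v y2) /\ aval S T (z1 +v z2) (y1 +v y2) = aval S T z1 y1 +v aval S T z2 y2.
Proof. intros Hz H1 H2. destruct (frag_add z1 z2 y1 y2 Hz H1 H2) as [Hf [Hd1 [Hd2 Heq]]].
 split; auto. unfold aval. rewrite Heq, HS, HT by auto. apply addACA. Qed.

Lemma sub_swap {V : VectorLattice} (a b c : V) : a -v b <=v c -> a -v c <=v b.
Proof. intro H. apply le_subr in H. rewrite vaddC in H. apply le_subl; auto. Qed.

Lemma key_zero {E F : VectorLattice} (HF : dedekind_complete F) (S T : E -> F)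
  (HS : uryson S) (HT : uryson T)
  (HSpos : forall x, vzero <=v S x) (HTpos : forall x, vzero <=v T x)
  (HST : uryson_inf S T (fun _ => vzero)) (x : E) (v : F) :
  (forall y, fragment x y -> v <=v aval S T x y) -> v <=v vzero.
Proof. intro Hv. set (R := Rop HF S T HSpos HTpos).
 assert (Rs : forall z, (forall y, fragment z y -> R z <=v aval S T z y) /\
     (forall l, (forall y, fragment z y -> l <=v aval S T z y) -> l <=v R z)) by apply Rop_spec.
 destruct HS as [HSo HSb]. destruct HT as [HTo HTb].
 assert (R0 : forall z, vzero <=v R z).
 { intro z. apply (proj2 (Rs z)). intros y _. apply add_ge0; auto. }
 assert (RS : forall z, R z <=v S z).
 { intro z. eapply vle_trans. apply (proj1 (Rs z) vzero (frag0 z)).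
   unfold aval. rewrite oa_zero, add0l, sub0 by auto. apply vle_refl. }
 assert (RT : forall z, R z <=v T z).
 { intro z. eapply vle_trans. apply (proj1 (Rs z) z (fragz z)).
   unfold aval. rewrite subv, (oa_zero S), vadd0 by auto. apply vle_refl. }
 assert (Ru : uryson R).
 { split.
   - intros z1 z2 Hz. apply vle_antisym.
     + apply le_subr. apply (proj2 (Rs z1)). intros y1 Hy1.
       apply sub_swap. apply (proj2 (Rs z2)). intros y2 Hy2.
       apply sub_swap. apply le_subl. destruct (aval_add S T HSo HTo z1 z2 y1 y2 Hz Hy1 Hy2) as [Hf He].
       rewrite <- He. apply (proj1 (Rs _)); auto.
     + apply (proj2 (Rs _)). intros y Hy.
       destruct (frag_decomp z1 z2 y Hz Hy) as [y1 [y2 [Hy1 [Hy2 ->]]]].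
       destruct (aval_add S T HSo HTo z1 z2 y1 y2 Hz Hy1 Hy2) as [_ ->].
       apply le_add2; apply (proj1 (Rs _)); auto.
   - intros A HA. destruct (HSb A HA) as [a [b Hab]].
     exists vzero, b. intros w [z [Hz ->]]. split; auto.
     eapply vle_trans; [apply RS|]. apply (Hab (S z)). eauto. }
 destruct HST as [_ [_ [_ Hmax]]].
 assert (K := Hmax R Ru RS RT x). simpl in K.
 eapply vle_trans; [|exact K]. apply (proj2 (Rs x)); auto. Qed.

Lemma zorn_fam (T:Type) (P : (T -> Prop) -> Prop) :
 (forall Fm : (T->Prop)->Prop, (forall X, Fm X -> P X) ->
   (forall X Y, Fm X -> Fm Y -> (forall t, X t -> Y t) \/ (forall t, Y t -> X t)) ->
   P (fun t => exists X, Fm X /\ X t)) ->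
 exists A, P A /\ forall B, (forall t, A t -> B t) -> P B -> forall t, B t -> A t.
Proof.
intros H.
destruct (@classical_sets.Zorn_bigcup T P) as [A [PA HA]].
- intros Fm HF Htot.
  assert (E : classical_sets.bigcup Fm (fun X => X) = (fun t => exists X, Fm X /\ X t)).
  { apply functional_extensionality; intro t.
    apply propositional_extensionality; split.
    - intros [X h1 h2]; eauto.
    - intros [X [h1 h2]]; econstructor; eauto. }
  rewrite E. apply H; auto.
- exists A; split; auto.
  intros B hAB hB t hBt.
  destruct (classic (forall t, B t -> A t)) as [h|h]; auto.
  exfalso; apply (HA B); auto. split; auto.
Qed.

Lemma scal_inv_zero {V : VectorLattice} (e : R) (x : V) : 0 < e -> vscal e x = vzero -> x = vzero.
Proof. intros He H. rewrite <- (vscal1 x). replace 1 with (/ e * e) by (field; lra).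
 rewrite <- vscalA, H, scal0r; reflexivity. Qed.

Theorem theorem3p2 (E F : VectorLattice) (HF : dedekind_complete F)
  (S T : E -> F) (HS : uryson S) (HT : uryson T)
  (HSpos : forall x, vle vzero (S x)) (HTpos : forall x, vle vzero (T x))
  (HST : uryson_inf S T (fun _ => vzero)) :
  forall (x : E) (u : F), weak_order_unit u -> forall eps : R, 0 < eps ->
  exists (D : Type) (pi : D -> F -> F) (xs : D -> E),
    partition_of_unity pi /\
    (forall a, fragment x (xs a)) /\
    (forall a, vle (pi a (vadd (T (xs a)) (S (vsub x (xs a))))) (vscal eps u)).
Proof.
 intros x u [Hu0 Hu] eps Heps.
 set (eu := vscal eps u).
 assert (Heu : vzero <=v eu) by (apply scal_ge0; auto; lra).
 set (cy := fun y => vpos (aval S T x y -v eu)).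
 set (dy := fun y => vneg (aval S T x y -v eu)).
 assert (Acd : forall y, aval S T x y = (cy y -v dy y) +v eu).
 { intro y. unfold cy, dy. rewrite pos_neg, subK; reflexivity. }
 set (dc := @disj_compl F).
 set (Good := fun K : F -> Prop => (exists w, dc K w /\ w <> vzero) /\
    (exists y, fragment x y /\ forall q, dc K q -> disjoint q (cy y))).
 set (Valid := fun M : (F -> Prop) -> Prop => (forall K, M K -> Good K) /\
    (forall K1 K2, M K1 -> M K2 -> K1 <> K2 -> forall p q, dc K1 p -> dc K2 q -> disjoint p q)).
 destruct (zorn_fam (F -> Prop) Valid) as [M0 [[HM0g HM0d] HM0max]].
 { intros Fm HFm Hch. split.
   - intros K [M [HM HK]]. apply (proj1 (HFm M HM)); auto.
   - intros K1 K2 [M1 [HM1 HK1]] [M2 [HM2 HK2]]. destruct (Hch M1 M2 HM1 HM2) as [h|h].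
     + apply (proj2 (HFm M2 HM2)); auto.
     + apply (proj2 (HFm M1 HM1)); auto. }
 set (D := {K : F -> Prop | M0 K}).
 assert (Hy : forall a : D, {y | fragment x y /\ forall q, dc (proj1_sig a) q -> disjoint q (cy y)}).
 { intro a. apply constructive_indefinite_description. apply (proj2 (HM0g _ (proj2_sig a))). }
 exists D, (fun a => proj HF (proj1_sig a)), (fun a => proj1_sig (Hy a)).
 split; [|split].
 3: { intro a. destruct (Hy a) as [y [Hfy Hcy]]. simpl. set (K := proj1_sig a).
      change (vle (proj HF K (aval S T x y)) eu).
      rewrite Acd, proj_add, proj_sub.
      rewrite (proj_out HF K (cy y)). 
      2: { intros q Hq. apply Hcy; auto. }
      rewrite sub0l. destruct (proj_pos HF K (dy y)) as [Hd0 _]. unfold dy; apply neg_ge0.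
      destruct (proj_pos HF K eu Heu) as [_ He].
      eapply vle_trans; [|exact He]. apply vle_trans with (vzero +v proj HF K eu).
      apply vle_add. apply ge0_opp; auto. rewrite add0l; apply vle_refl. }
 2: { intro a. exact (proj1 (proj2_sig (Hy a))). }
 split; [|split; [|split]].
 - intro a. apply proj_bp.
 - intros a b Hab z. apply proj_out. intros p Hp.
   destruct (proj_spec HF (proj1_sig b) z) as [Hb _].
   apply (HM0d (proj1_sig a) (proj1_sig b)); [exact (proj2_sig a)|exact (proj2_sig b)| |exact Hp|exact Hb].
   intro E0. apply Hab. destruct a as [ka pa], b as [kb pb]. simpl in E0. subst kb.
   f_equal. apply proof_irrelevance.
 - intros a z; reflexivity.
 - intros rho [Brho [HBrho Hrho]] Hle z.
   apply NNPP. intro Hne.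
   set (w := z -v rho z).
   assert (Hw0 : w <> vzero). { intro H0. apply Hne. symmetry. apply sub_eq0; auto. }
   assert (HwK : forall K, M0 K -> forall p, dc K p -> disjoint p w).
   { intros K HK p Hp. set (a := exist (fun K => M0 K) K HK : D).
     assert (Hpw : proj HF K w = vzero).
     { unfold w. rewrite proj_sub. specialize (Hle a z). simpl in Hle. rewrite Hle. apply subv. }
     destruct (proj_spec HF K w) as [_ H2]. rewrite Hpw, sub0 in H2. apply H2; auto. }
   set (Ks := fun q => Brho q \/ exists K, M0 K /\ dc K q).
   assert (Hws : dc Ks w).
   { intros q [Hq|[K [HK Hq]]]. apply (proj2 (Hrho z)); auto. apply (HwK K); auto. }
   (* find a good new band *)
   assert (Hex : exists y, fragment x y /\ exists w', dc (fun q => Ks q \/ q = cy y) w' /\ w' <> vzero).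
   { apply NNPP. intro Hno.
     assert (HPd : forall y, fragment x y -> (proj HF Ks) (dy y) = vzero).
     { intros y Hfy. apply NNPP. intro Hnz. apply Hno. exists y; split; auto.
       exists ((proj HF Ks) (dy y)); split; auto.
       destruct (proj_spec HF Ks (dy y)) as [Hin _].
       destruct (proj_pos HF Ks (dy y)) as [Hp0 Hp1]. unfold dy; apply neg_ge0.
       intros q [Hq | ->]. apply Hin; auto.
       apply disj_sym. apply disj_solid with (dy y).
       rewrite !abs_pos; auto. unfold dy; apply neg_ge0.
       unfold disjoint. rewrite !abs_pos by (unfold dy, cy; auto using pos_ge0, neg_ge0).
       rewrite meet_comm. unfold cy, dy. apply pos_neg_disj. }
     assert (HPe : (proj HF Ks) eu <=v vzero).
     { apply (key_zero HF S T HS HT HSpos HTpos HST x). intros y Hfy.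
       destruct (proj_pos HF Ks (aval S T x y)) as [_ Ha]. apply add_ge0; auto.
       eapply vle_trans; [|exact Ha]. rewrite Acd, proj_add, proj_sub, HPd, sub0 by auto.
       rewrite vaddC. apply le_addr_ge0. apply proj_pos. unfold cy; apply pos_ge0. }
     assert (HPu : (proj HF Ks) u = vzero).
     { apply (scal_inv_zero eps); auto. rewrite <- proj_scal. fold eu. apply vle_antisym; auto.
       apply proj_pos; auto. }
     destruct (proj_spec HF Ks u) as [_ Hu2]. rewrite HPu, sub0 in Hu2.
     apply Hw0. apply disj_self. apply Hu. apply Hu2; auto. }
   destruct Hex as [y [Hfy [w' [Hw' Hw'0]]]].
   set (K' := fun q => Ks q \/ q = cy y).
   assert (Hsub : forall K, M0 K -> forall p, dc K p -> K' p).
   { intros K HK p Hp. left; right; eauto. }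
   assert (HV : Valid (fun K => M0 K \/ K = K')).
   { split.
     - intros K [HK| ->]; auto. split. exists w'; auto.
       exists y; split; auto. intros q Hq. apply disj_sym. apply Hq. right; reflexivity.
     - intros K1 K2 [H1| ->] [H2| ->] Hne12 p q Hp Hq.
       + apply (HM0d K1 K2); auto.
       + apply Hq. apply (Hsub K1); auto.
       + apply disj_sym. apply Hp. apply (Hsub K2); auto.
       + exfalso; auto. }
   assert (HK' : M0 K') by (apply (HM0max _ (fun K HK => or_introl HK) HV); right; reflexivity).
   apply Hw'0. apply disj_self. apply Hw'. apply (Hsub K'); auto.
Qed.
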